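(* Let $\mathbb{X}$ be a finite alphabet and let $\Gamma$ be a Yang-Kieffer minimal grammar transform, i.e. $\Gamma(w)\in\mathcal{G}(w)$, $|\Gamma(w)|=\min_{\mathsf{G}\in\mathcal{G}(w)}|\mathsf{G}|$, and $\alpha_i\neq\lambda$ for every secondary rule $A_i\to\alpha_i$ of $\Gamma(w)$. Then for any strings $u,v\in\mathbb{X}^*$ and $w=uv$, $$0\le|\Gamma(u)|+|\Gamma(v)|-|\Gamma(w)|\le \mathrm{V}[\Gamma(w)]\,\mathbf{L}(w).$$
   Context: $\mathbb{X}^*$ is the set of all finite strings over $\mathbb{X}$ including the empty string $\lambda$. An admissible grammar is a tuple $\mathsf{G}=(\alpha_1,\dots,\alpha_n)$ standing for rules $A_i\to\alpha_i$ with start symbol $A_1$ and secondary nonterminals $A_2,\dots,A_n$, where $\alpha_i\in(\{A_{i+1},\dots,A_n\}\cup\mathbb{X})^*$; it generates exactly one string. $\mathcal{G}(w)$ is the set of admissible grammars generating $w$, $\mathrm{V}[\mathsf{G}]:=n$, and the Yang-Kieffer length is $|\mathsf{G}|:=\sum_i|\alpha_i|$. $\mathbf{L}(w):=\max\{|s|: w=x_1sy_1=x_2sy_2,\ x_1\neq x_2\}$ with $s,x_i,y_i\in\mathbb{X}^*$ (maximal length of a possibly overlapping repeat). *)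

(* Defs.v *)
From mathcomp Require Import all_boot.
From Stdlib Require Import ClassicalEpsilon.
Set Implicit Arguments. Unset Strict Implicit. Unset Printing Implicit Defensive.

Section Grammars.
Variable X : finType.

(* A symbol is a terminal (inl x) or a nonterminal (inr j), where the
   nonterminal index j is 0-based: inr 0 is the start symbol A_1,
   inr j stands for A_{j+1}. *)
Definition symbol := (X + nat)%type.

(* A grammar (alpha_1, ..., alpha_n) is the list of right-hand sides;
   the k-th entry (0-based) is the right-hand side of A_{k+1}. *)
Definition grammar := seq (seq symbol).

Definition sym_ok (n k : nat) (s : symbol) : bool :=
  match s with inl _ => true | inr j => (k < j) && (j < n) end.

Definition admissible (G : grammar) : bool :=
  (0 < size G) &&
  all (fun k => all (sym_ok (size G) k) (nth [::] G k)) (iota 0 (size G)).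

(* Expansion of nonterminal A_{i+1} with fuel; for admissible grammars the
   fuel size G is sufficient (derivation depth is at most n). *)
Fixpoint expand (G : grammar) (fuel i : nat) : seq X :=
  match fuel with
  | 0 => [::]
  | f.+1 => flatten (map (fun s => match s with
                                   | inl x => [:: x]
                                   | inr j => expand G f j end) (nth [::] G i))
  end.

Definition generated (G : grammar) : seq X := expand G (size G) 0.

Definition grammar_for (w : seq X) (G : grammar) : Prop :=
  admissible G /\ generated G = w.

Definition gV (G : grammar) : nat := size G.

Definition glen (G : grammar) : nat := sumn (map size G).

Definition YK_minimal_transform (Gam : seq X -> grammar) : Prop :=
  forall w : seq X,
    grammar_for w (Gam w) /\
    (forall G, grammar_for w G -> glen (Gam w) <= glen G) /\
    (forall i, 0 < i < size (Gam w) -> nth [::] (Gam w) i != [::]).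

Definition is_repeat (w s : seq X) : Prop :=
  exists x1 y1 x2 y2 : seq X,
    w = x1 ++ s ++ y1 /\ w = x2 ++ s ++ y2 /\ x1 <> x2.

Definition decide (P : Prop) : bool :=
  if excluded_middle_informative P then true else false.

(* L(w): maximal length of a repeat (0 if there is none, i.e. w empty).
   Any repeat has length <= size w, so the max over 0..size w is exact. *)
Definition Lrep (w : seq X) : nat :=
  \max_(k < (size w).+1 | decide (exists s, size s = k /\ is_repeat w s)) k.

End Grammars.

(* Main.v *)
Require Import Defs.
From mathcomp Require Import all_boot zify.
From Stdlib Require Import ClassicalEpsilon.
Set Implicit Arguments. Unset Strict Implicit. Unset Printing Implicit Defensive.


Section Basics.
Variable X : finType.
Implicit Types (G : grammar X) (s : symbol X) (l : seq (symbol X)).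

Definition symE (E : nat -> seq X) s : seq X :=
  match s with inl x => [:: x] | inr j => E j end.

Lemma expandS G f j :
  expand G f.+1 j = flatten (map (symE (expand G f)) (nth [::] G j)).
Proof. by []. Qed.

Lemma admP G : admissible G <->
  (0 < size G /\ forall k s, s \in nth [::] G k -> sym_ok (size G) k s).
Proof.
split.
- case/andP=> H0 /allP H; split => // k s Hs.
  case: (ltnP k (size G)) => Hk.
  + have := H k; rewrite mem_iota add0n => /(_ Hk) /allP; exact.
  + by rewrite nth_default in Hs.
- case=> H0 H; apply/andP; split => //; apply/allP => k _; apply/allP => s.
  exact: H.
Qed.

Lemma adm_sym G k s : admissible G -> s \in nth [::] G k -> sym_ok (size G) k s.
Proof. by case/admP => _; apply. Qed.

Lemma expand_out G f j : size G <= j -> expand G f j = [::].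
Proof. by case: f => [|f] //= H; rewrite nth_default. Qed.

Lemma stab G : admissible G -> forall f1 f2 j,
  size G - j <= f1 -> size G - j <= f2 -> expand G f1 j = expand G f2 j.
Proof.
move=> HA; elim=> [|f1 IH] f2 j H1 H2.
  by rewrite !expand_out //; lia.
case: (ltnP j (size G)) => Hj; last by rewrite !expand_out.
case: f2 H2 => [|f2] H2; first by lia.
rewrite !expandS; congr flatten; apply/eq_in_map => s Hs.
case: s Hs => [x|m] Hs //=.
have /= /andP[a b] := adm_sym HA Hs.
apply: IH; lia.
Qed.

Definition E G j := expand G (size G) j.

Lemma unfoldE G j : admissible G ->
  E G j = flatten (map (symE (E G)) (nth [::] G j)).
Proof.
move=> HA; have H0 : 0 < size G by case/admP: HA.
have [n Hn] : exists n, size G = n.+1 by exists (size G).-1; lia.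
rewrite {1}/E {1}Hn expandS; congr flatten; apply/eq_in_map => s Hs.
case: s Hs => [x|m] Hs //=.
have /= /andP[a b] := adm_sym HA Hs.
rewrite /E; apply: stab => //; lia.
Qed.

Lemma genE G : generated G = E G 0.
Proof. by []. Qed.

Definition shs (phi : nat -> nat) s : symbol X :=
  match s with inl x => inl x | inr j => inr (phi j) end.

Lemma sim G G' (phi : nat -> nat) (P : pred nat) :
  (forall m, P m -> nth [::] G' (phi m) = map (shs phi) (nth [::] G m)) ->
  (forall m m', P m -> inr m' \in nth [::] G m -> P m') ->
  forall f m, P m -> expand G' f (phi m) = expand G f m.
Proof.
move=> H1 H2; elim=> [|f IH] m Pm //.
rewrite !expandS H1 // -map_comp; congr flatten; apply/eq_in_map => s Hs.
case: s Hs => [x|m'] Hs //=.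
apply: IH; exact: H2 Hs.
Qed.

Lemma size_flat_ge l (g : symbol X -> seq X) :
  (forall s, s \in l -> 0 < size (g s)) -> size l <= size (flatten (map g l)).
Proof.
elim: l => //= s l IH H; rewrite size_cat.
have := H s (mem_head _ _); have := IH (fun s' Hs' => H s' (mem_behead (s:=s::l) Hs')); lia.
Qed.

Lemma flat_inl (E0 : nat -> seq X) t : flatten (map (symE E0) (map inl t)) = t.
Proof. by elim: t => //= x t ->. Qed.

End Basics.
Arguments shs {X}. Arguments symE {X}.

Section Comb.
Variable X : finType.
Implicit Types (G : grammar X) (s : symbol X) (l : seq (symbol X)).

Lemma shs_id l : map (shs id) l = l.
Proof. by elim: l => //= [[x|j] l ->]. Qed.

Lemma comb G1 G2 : admissible G1 -> admissible G2 ->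
  exists C, admissible C /\ generated C = generated G1 ++ generated G2 /\
            glen C = glen G1 + glen G2.
Proof.
case: G1 => [|a r1]; first by case/admP.
case: G2 => [|b r2]; first by move=> _ /admP [].
move=> H1 H2.
pose d := size r1.
pose sh := @shs X (fun m => m + d).
pose C := (a ++ map sh b) :: (r1 ++ map (map sh) r2).
have sC : size C = (size r1 + size r2).+1 by rewrite /C /= size_cat size_map.
have nC1 : forall m, 0 < m < (size r1).+1 -> nth [::] C m = nth [::] (a :: r1) m.
  by case=> [|m] //= Hm; rewrite nth_cat ifT //; lia.
have nC2 : forall m, 0 < m -> nth [::] C (m + d) = map sh (nth [::] (b :: r2) m).
  case=> [|m] //= _; rewrite nth_cat ifF; last by rewrite /d; lia.
  rewrite /d addnK; case: (ltnP m (size r2)) => Hm; first by rewrite (nth_map [::]).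
  by rewrite !nth_default ?size_map.
exists C; split; [|split].
- apply/admP; split; first by rewrite sC.
  rewrite sC => k s.
  case: k => [|k].
  + rewrite /= mem_cat => /orP [Hs|/mapP [t Ht ->]].
    * have := adm_sym H1 (k:=0) Hs; case: s {Hs} => //= j /andP [p q]; apply/andP; lia.
    * have := adm_sym H2 (k:=0) Ht; case: t {Ht} => //= j /andP [p q]; apply/andP; rewrite /d; lia.
  + case: (ltnP k (size r1)) => Hk.
    * rewrite (nC1 k.+1) ?Hk // => Hs.
      have := adm_sym H1 Hs; case: s {Hs} => //= j /andP [p q]; apply/andP; lia.
    * have -> : k.+1 = (k - d).+1 + d by rewrite /d; lia.
      rewrite nC2 // => /mapP [t Ht ->].
      have := adm_sym H2 Ht; case: t {Ht} => //= j /andP [p q]; apply/andP; rewrite /d; lia.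
- rewrite /generated sC expandS /= map_cat flatten_cat.
  congr (_ ++ _).
  + congr flatten; apply/eq_in_map => s Hs.
    case: s Hs => [x|m] Hs //=.
    have /= /andP[p q] := adm_sym H1 (k:=0) Hs.
    transitivity (expand (a :: r1) (size r1 + size r2) m).
      rewrite -[X in expand C _ X]/(id m).
      apply: (sim (P := fun m => 0 < m < (size r1).+1)); try lia;
      try (by move=> m' Hm'; rewrite shs_id nC1);
      move=> m0 m' Hm0 Hs'; have /= /andP [e f] := adm_sym H1 Hs'; lia.
    apply: stab => //=; lia.
  + rewrite -map_comp; congr flatten; apply/eq_in_map => s Hs.
    case: s Hs => [x|m] Hs //=.
    have /= /andP[p q] := adm_sym H2 (k:=0) Hs.
    transitivity (expand (b :: r2) (size r1 + size r2) m).
      apply: (sim (phi := fun m => m + d) (P := fun m => 0 < m)); try lia;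
      try (by move=> m' Hm'; exact: nC2);
      move=> m0 m' Hm0 Hs'; have /= /andP [e f] := adm_sym H2 Hs'; lia.
    apply: stab => //=; lia.
- have Hr : forall r : seq (seq (symbol X)), sumn (map size (map (map sh) r)) = sumn (map size r).
    by elim=> //= x r ->; rewrite size_map.
  rewrite /glen /= map_cat sumn_cat Hr size_cat size_map; lia.
Qed.

End Comb.

Section Sums.
Variable T : eqType.
Implicit Types (l : seq T) (F : T -> nat).
Lemma sumn_ge_in l F x : x \in l -> F x <= sumn (map F l).
Proof. elim: l => //= y l IH; rewrite in_cons => /orP [/eqP ->|/IH]; lia. Qed.
Lemma sumn_ge2 l F x y : x \in l -> y \in l -> x != y -> F x + F y <= sumn (map F l).
Proof.
elim: l => //= z l IH; rewrite !in_cons => /orP [/eqP ->|Hx] /orP [/eqP ->|Hy] Hne.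
- by rewrite eqxx in Hne.
- have := sumn_ge_in F Hy; lia.
- have := sumn_ge_in F Hx; lia.
- have := IH Hx Hy Hne; lia.
Qed.
Lemma sumn_pos l F : 0 < sumn (map F l) -> exists2 x, x \in l & 0 < F x.
Proof.
elim: l => //= y l IH H.
case: (posnP (F y)) => Hy.
- have [x Hx Fx] : exists2 x, x \in l & 0 < F x by apply: IH; lia.
  by exists x => //; rewrite in_cons Hx orbT.
- by exists y => //; rewrite mem_head.
Qed.
Lemma sumn_count l F (p : pred T) : (forall x, p x -> 0 < F x) -> count p l <= sumn (map F l).
Proof. move=> H; elim: l => //= y l IH; case Hp: (p y) => /=; last lia. have := H y Hp; lia. Qed.
End Sums.

Section Occ.
Variables (X : finType) (G : grammar X) (i : nat).

Definition symocc (F : nat -> seq nat) (s : symbol X) : seq nat :=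
  match s with inl _ => [::] | inr m => (if m == i then [:: 0] else [::]) ++ F m end.

Fixpoint occl (F : nat -> seq nat) (l : seq (symbol X)) : seq nat :=
  match l with
  | [::] => [::]
  | s :: l' => symocc F s ++ map (addn (size (symE (E G) s))) (occl F l')
  end.

Fixpoint occs (f j : nat) : seq nat :=
  match f with 0 => [::] | f'.+1 => occl (occs f') (nth [::] G j) end.

Lemma size_occl F l : size (occl F l) = sumn (map (fun s => size (symocc F s)) l).
Proof. by elim: l => //= s l IH; rewrite size_cat size_map IH. Qed.

Lemma size_symocc F m : size (symocc F (inr m)) = (m == i) + size (F m).
Proof. by rewrite /= size_cat; case: (m == i). Qed.

End Occ.
Arguments size_symocc {X}.
Arguments symocc {X}.

Lemma two_le a b S : a + b <= S -> 0 < a -> 0 < b -> 1 < S.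
Proof. lia. Qed.
Lemma one_le a S : a <= S -> 0 < a -> 0 < S.
Proof. lia. Qed.

Section OccThm.
Variables (X : finType) (G : grammar X).
Hypothesis HA : admissible G.
Let n := size G.

Lemma rch_step k f j : 0 < size (occs G k f.+1 j) ->
  exists2 m, inr m \in nth [::] G j & (k == m) || (0 < size (occs G k f m)).
Proof.
rewrite /= size_occl => /sumn_pos [[x|m] Hs] //=.
rewrite (@size_symocc X) => H; exists m => //; rewrite eq_sym; case: (m == k) H => //=.
Qed.

Lemma occs_lt k f j : 0 < size (occs G k f j) -> j < k.
Proof.
elim: f j => [|f IH] j //= H.
have [m Hm /orP Hor] := rch_step H.
have /= /andP [a b] := adm_sym HA Hm.
case: Hor => [/eqP -> //|/IH]; lia.
Qed.

Lemma occsA i f j k : n - j <= f -> k < n ->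
  (k == j) || (0 < size (occs G k f j)) -> inr i \in nth [::] G k ->
  0 < size (occs G i f j).
Proof.
elim: f j => [|f IH] j Hf Hk Hr Hi.
  by move: Hr; rewrite /= orbF => /eqP E; rewrite /n in Hf Hk; lia.
case/orP: Hr => [/eqP Ekj|Hr].
- subst k; rewrite /= size_occl.
  have := sumn_ge_in (fun s => size (symocc i (occs G i f) s)) Hi.
  rewrite (@size_symocc X) eqxx /= => H; exact: leq_trans (leq_addr _ _) H.
- have [m Hm Hm'] := rch_step Hr.
  have /= /andP [a b] := adm_sym HA Hm.
  have := IH m ltac:(rewrite /n in Hf *; lia) Hk Hm' Hi.
  rewrite /= size_occl => H.
  have := sumn_ge_in (fun s => size (symocc i (occs G i f) s)) Hm.
  rewrite (@size_symocc X) => H2; apply: leq_trans H2; exact: leq_trans H (leq_addl _ _).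
Qed.

Lemma occsC i f j k1 k2 : n - j <= f -> k1 < n -> k2 < n ->
  (k1 == j) || (0 < size (occs G k1 f j)) ->
  (k2 == j) || (0 < size (occs G k2 f j)) ->
  (k1 != k2 /\ inr i \in nth [::] G k1 /\ inr i \in nth [::] G k2) \/
  (k1 = k2 /\ 2 <= count (pred1 (inr i)) (nth [::] G k1)) ->
  1 < size (occs G i f j).
Proof.
have cnt_in : forall k, 0 < count (pred1 (inr i)) (nth [::] G k) -> inr i \in nth [::] G k.
  by move=> k; rewrite -has_count has_pred1.
elim: f j k1 k2 => [|f IH] j k1 k2 Hf Hk1 Hk2 Hr1 Hr2 Hc.
  by move: Hr1; rewrite /= orbF => /eqP E; rewrite /n in Hf Hk1; lia.
pose Fi := fun s : symbol X => size (symocc i (occs G i f) s).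
have Hs : size (occs G i f.+1 j) = sumn (map Fi (nth [::] G j)) by rewrite /= size_occl.
rewrite Hs.
have ccA : forall m k, inr m \in nth [::] G j -> k < n ->
    (k == m) || (0 < size (occs G k f m)) -> inr i \in nth [::] G k -> 0 < Fi (inr m).
  move=> m k Hm Hk Hr Hi; rewrite /Fi (@size_symocc X).
  have /= /andP [a b] := adm_sym HA Hm.
  have := occsA (f:=f) (j:=m) ltac:(rewrite /n in Hf *; lia) Hk Hr Hi; lia.
have oneroot : forall k, k < n -> (k == j) || (0 < size (occs G k f.+1 j)) ->
   k != j -> inr i \in nth [::] G k -> inr i \in nth [::] G j ->
   1 < sumn (map Fi (nth [::] G j)).
  move=> k Hk Hr Hkj Hi Hij.
  have Hr' : 0 < size (occs G k f.+1 j) by move: Hr; rewrite (negbTE Hkj).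
  have [m Hm Hm'] := rch_step Hr'.
  have Fm := ccA m k Hm Hk Hm' Hi.
  case: (eqVneq (inr m : symbol X) (inr i)) => [[Emi]|Hne].
  - subst m; have /= /andP [a b] := adm_sym HA Hm.
    have H := occsA (f:=f) (j:=i) ltac:(rewrite /n in Hf *; lia) Hk Hm' Hi.
    have := occs_lt H; lia.
  - have Hne' : inr i != inr m :> symbol X by rewrite eq_sym.
    apply: (two_le (sumn_ge2 Fi Hij Hm Hne')) => //.
    by rewrite /Fi (@size_symocc X) eqxx.
case: Hc => [[Hne [Hi1 Hi2]]|[Ek Hc]].
- case: (eqVneq k1 j) => Hk1j.
  + subst k1; apply: (oneroot k2) => //.
    by apply: contra Hne => /eqP ->.
  + case: (eqVneq k2 j) => Hk2j.
    * subst k2; apply: (oneroot k1) => //.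
    * have Hr1' : 0 < size (occs G k1 f.+1 j) by move: Hr1; rewrite (negbTE Hk1j).
      have Hr2' : 0 < size (occs G k2 f.+1 j) by move: Hr2; rewrite (negbTE Hk2j).
      have [m1 Hm1 Hm1'] := rch_step Hr1'.
      have [m2 Hm2 Hm2'] := rch_step Hr2'.
      have /= /andP [a1 b1] := adm_sym HA Hm1.
      case: (eqVneq m1 m2) => Hm12.
      -- subst m2.
         have H := IH m1 k1 k2 ltac:(rewrite /n in Hf *; lia) Hk1 Hk2 Hm1' Hm2' (or_introl (conj Hne (conj Hi1 Hi2))).
         apply: (leq_trans _ (sumn_ge_in Fi Hm1)); rewrite /Fi (@size_symocc X).
         exact: leq_trans H (leq_addl _ _).
      -- have Hne12 : inr m1 != inr m2 :> symbol X by apply: contra_neq Hm12 => -[].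
         apply: (two_le (sumn_ge2 Fi Hm1 Hm2 Hne12)).
         ++ exact: ccA m1 k1 Hm1 Hk1 Hm1' Hi1.
         ++ exact: ccA m2 k2 Hm2 Hk2 Hm2' Hi2.
- subst k2.
  have Hi1 := cnt_in k1 ltac:(lia).
  case: (eqVneq k1 j) => Hk1j.
  + subst k1.
    apply: (leq_trans Hc); apply: sumn_count => x /eqP ->.
    by rewrite /Fi (@size_symocc X) eqxx.
  + have Hr1' : 0 < size (occs G k1 f.+1 j) by move: Hr1; rewrite (negbTE Hk1j).
    have [m1 Hm1 Hm1'] := rch_step Hr1'.
    have /= /andP [a1 b1] := adm_sym HA Hm1.
    have H := IH m1 k1 k1 ltac:(rewrite /n in Hf *; lia) Hk1 Hk1 Hm1' Hm1' (or_intror (conj erefl Hc)).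
    apply: (leq_trans _ (sumn_ge_in Fi Hm1)); rewrite /Fi (@size_symocc X).
    exact: leq_trans H (leq_addl _ _).
Qed.

End OccThm.

Section D.
Variable X : finType.
Implicit Types (G : grammar X) (s : symbol X) (l : seq (symbol X)).

Lemma occl_pos G i F l p :
  (forall m p, p \in F m -> exists x y, E G m = x ++ E G i ++ y /\ size x = p) ->
  p \in occl G i F l -> exists x y, flatten (map (symE (E G)) l) = x ++ E G i ++ y /\ size x = p.
Proof.
move=> HF; elim: l p => //= s l IH p; rewrite mem_cat => /orP [H|H].
- case: s H => [x|m] //=; rewrite mem_cat => /orP [H|H].
  + case: (eqVneq m i) H => [->|] //; rewrite inE => /eqP ->.
    by exists [::], (flatten (map (symE (E G)) l)).
  + have [x [y [Ex Sx]]] := HF m p H.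
    by exists x, (y ++ flatten (map (symE (E G)) l)); rewrite Ex -!catA.
- case/mapP: H => p' /IH [x [y [Ex Sx]]] ->.
  exists (symE (E G) s ++ x), y; rewrite Ex -!catA size_cat Sx; split => //.
Qed.

Lemma occs_pos G i f j p : admissible G -> p \in occs G i f j ->
  exists x y, E G j = x ++ E G i ++ y /\ size x = p.
Proof.
move=> HA; elim: f j p => [|f IH] j p //= H.
rewrite unfoldE //; apply: occl_pos H => m p' Hp'; exact: IH.
Qed.

Lemma occs_sorted G i f j : admissible G -> 0 < size (E G i) -> sorted ltn (occs G i f j).
Proof.
move=> HA Hi; elim: f j => [|f IH] j //=.
have Fi : occs G i f i = [::].
  case E0: (occs G i f i) => [|a t] //.
  have : 0 < size (occs G i f i) by rewrite E0.
  move/(occs_lt HA); lia.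
have Hb : forall m p, p \in occs G i f m -> p < size (E G m).
  move=> m p /(occs_pos HA) [x [y [-> <-]]]; rewrite !size_cat; lia.
elim: (nth [::] G j) => //= s l IHl.
rewrite (sorted_pairwise ltn_trans) pairwise_cat; apply/and3P; split.
- apply/allrelP => x y Hx /mapP [y' _ ->].
  case: s Hx => [x0|m] //=; rewrite mem_cat => /orP [H|H].
  + case: (eqVneq m i) H => [->|] //; rewrite inE => /eqP ->; lia.
  + have := Hb m x H; lia.
- case: s => [x0|m] //=; case: (eqVneq m i) => [->|_] /=.
  + by rewrite Fi.
  + by rewrite -(sorted_pairwise ltn_trans).
- rewrite -(sorted_pairwise ltn_trans) sorted_map.
  apply: sub_sorted IHl => a b /=; lia.
Qed.

Lemma NE G : admissible G -> (forall k, 0 < k < size G -> nth [::] G k != [::]) ->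
  forall j, 0 < j < size G -> size (nth [::] G j) <= size (E G j) /\ 0 < size (E G j).
Proof.
move=> HA HN j0 Hj0.
suff : forall d j, size G - j <= d -> 0 < j < size G ->
  size (nth [::] G j) <= size (E G j) /\ 0 < size (E G j) by apply.
elim=> [|d IH] j Hd Hj; first lia.
have H1 : size (nth [::] G j) <= size (E G j).
  rewrite unfoldE //; apply: size_flat_ge => -[x|m] Hm //=.
  have /= /andP [a b] := adm_sym HA Hm.
  by have [_ Hp] := IH m ltac:(lia) ltac:(lia).
split => //; apply: leq_trans H1.
have := HN j Hj; case: (nth [::] G j) => //.
Qed.

Lemma Lrep_ge (w t : seq X) : is_repeat w t -> size t <= Lrep w.
Proof.
move=> Hr.
have Hs : size t < (size w).+1.
  case: Hr => [x1 [y1 [x2 [y2 [E1 _]]]]]; rewrite E1 !size_cat; lia.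
rewrite /Lrep.
apply: (leq_bigmax_cond (F := fun k : 'I_(size w).+1 => nat_of_ord k) (Ordinal Hs)).
rewrite /decide; case: excluded_middle_informative => // H; exfalso; apply: H; by exists t.
Qed.

Lemma glen_set (L : seq (seq (symbol X))) k r : k < size L ->
  glen (set_nth [::] L k r) + size (nth [::] L k) = glen L + size r.
Proof.
rewrite /glen; elim: L k => [|a L IH] [|k] //= Hk.
- lia.
- have := IH k Hk; lia.
Qed.

Lemma zero_expand G k : forall f j, size (occs G k f j) = 0 -> j != k ->
  expand (set_nth [::] G k [::]) f j = expand G f j.
Proof.
elim=> [|f IH] j // H Hjk.
rewrite !expandS nth_set_nth /= (negbTE Hjk); congr flatten; apply/eq_in_map => -[x|m] Hm //=.
move: H; rewrite /= size_occl => H.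
have := sumn_ge_in (fun s => size (symocc k (occs G k f) s)) Hm.
rewrite H (@size_symocc X) => H2.
have Hmk : m != k by apply/negP => /eqP Em; rewrite Em eqxx in H2.
apply: IH => //; lia.
Qed.

Lemma zero_adm G k : admissible G -> k < size G -> admissible (set_nth [::] G k [::]).
Proof.
move=> HA Hk; have [H0 H] := proj1 (admP G) HA.
have Hs : size (set_nth [::] G k [::]) = size G by rewrite size_set_nth; lia.
apply/admP; rewrite Hs; split => // j s; rewrite nth_set_nth /=.
case: (j == k) => //; exact: H.
Qed.

Lemma reach G w : grammar_for w G -> (forall G', grammar_for w G' -> glen G <= glen G') ->
  (forall k, 0 < k < size G -> nth [::] G k != [::]) ->
  forall k, 0 < k < size G -> 0 < size (occs G k (size G) 0).
Proof.
move=> [HA Hw] Hmin HN k Hk; rewrite lt0n; apply/negP => /eqP H0.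
have Hs : size (set_nth [::] G k [::]) = size G by rewrite size_set_nth; lia.
have Hg : grammar_for w (set_nth [::] G k [::]).
  split; first by apply: zero_adm => //; lia.
  rewrite -Hw /generated Hs zero_expand //; lia.
have := Hmin _ Hg.
have := @glen_set G k [::] ltac:(lia).
have := HN k Hk; case: (nth [::] G k) => [|x t] //= _ H1 H2; lia.
Qed.

End D.

Section Inl.
Variable X : finType.
Implicit Types (G : grammar X) (s : symbol X) (l : seq (symbol X)).

Definition inl_rule (i : nat) (b r : seq (symbol X)) : seq (symbol X) :=
  flatten (map (fun s => if s == inr i then b else [:: s]) r).

Lemma size_inl i b r : size (inl_rule i b r) + count (pred1 (inr i)) r =
  size r + count (pred1 (inr i)) r * size b.
Proof.
elim: r => [|s r IH] //.
have -> : inl_rule i b (s :: r) = (if s == inr i then b else [:: s]) ++ inl_rule i b r by [].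
have -> : count (pred1 (inr i)) (s :: r) = (s == inr i) + count (pred1 (inr i)) r by [].
rewrite size_cat mulnDl.
change (size (s :: r)) with (size r).+1.
set c := count (pred1 (inr i)) r in IH *; set k := size (inl_rule i b r) in IH *.
clearbody c k; case: (s == inr i); rewrite ?size_seq1 /nat_of_bool ?mul1n ?mul0n.
-  move: IH. generalize (size b) (size r). intros. lia.
- change (size [:: s]) with 1; move: IH; generalize (size b) (size r); intros; lia.
Qed.

Lemma glen_map i b G : glen (map (inl_rule i b) G) + sumn (map (count (pred1 (inr i))) G) =
  glen G + sumn (map (count (pred1 (inr i))) G) * size b.
Proof.
rewrite /glen; elim: G => //= r G IH; rewrite mulnDl.
have := size_inl i b r; move: IH; rewrite -map_comp /=; lia.
Qed.

Lemma flat_inl_rule (g : symbol X -> seq X) i b r :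
  flatten (map g (inl_rule i b r)) =
  flatten (map (fun s => if s == inr i then flatten (map g b) else g s) r).
Proof.
elim: r => //= s r IH; rewrite map_cat flatten_cat IH.
by case: (s == inr i) => //=; rewrite cats0.
Qed.

Definition Ginl G i := set_nth [::] (map (inl_rule i (nth [::] G i)) G) i [::].

Lemma nth_Ginl G i j : nth [::] (Ginl G i) j =
  if j == i then [::] else inl_rule i (nth [::] G i) (nth [::] G j).
Proof.
rewrite /Ginl nth_set_nth /=; case: (j == i) => //.
case: (ltnP j (size G)) => Hj; first by rewrite (nth_map [::]).
rewrite (nth_default _ Hj) nth_default ?size_map //.
Qed.

Lemma size_Ginl G i : i < size G -> size (Ginl G i) = size G.
Proof. by move=> Hi; rewrite size_set_nth size_map; lia. Qed.

Lemma Ginl_adm G i : admissible G -> i < size G -> admissible (Ginl G i).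
Proof.
move=> HA Hi; apply/admP; rewrite size_Ginl //; split; first by case/admP: HA.
move=> k s; rewrite nth_Ginl; case: (k == i) => //.
case/flattenP => t /mapP [s0 Hs0 ->].
case: (eqVneq s0 (inr i)) => [Es0|Hne] Hs.
- subst s0; have /= /andP [a b] := adm_sym HA Hs0.
  have := adm_sym HA Hs; case: s {Hs} => //= m /andP [c d]; apply/andP; lia.
- by move: Hs; rewrite inE => /eqP ->; apply: adm_sym.
Qed.

Lemma Ginl_expand G i : admissible G -> forall f j, size G - j <= f -> j != i ->
  expand (Ginl G i) f j = expand G f j.
Proof.
move=> HA; elim=> [|f IH] j Hf Hji //.
rewrite !expandS nth_Ginl (negbTE Hji) flat_inl_rule; congr flatten.
apply/eq_in_map => s Hs.
case: (eqVneq s (inr i)) => [Es|Hne].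
- subst s; have /= /andP [a b] := adm_sym HA Hs.
  case: f IH Hf => [|f] IH Hf; first lia.
  change (symE (expand G f.+1) (inr i)) with (expand G f.+1 i); rewrite expandS; congr flatten; apply/eq_in_map => -[x|m] Hm //.
  change (expand (Ginl G i) f.+1 m = expand G f m).
  have /= /andP [c d] := adm_sym HA Hm.
  transitivity (expand G f.+1 m); first by apply: IH; [lia|apply/eqP; lia].
  apply: stab => //; lia.
- case: s Hs Hne => [x|m] Hs Hne //.
  change (expand (Ginl G i) f m = expand G f m).
  have /= /andP [c d] := adm_sym HA Hs.
  apply: IH; first lia.
  by apply: contra Hne => /eqP ->.
Qed.

Lemma one_rule (L : seq (seq (symbol X))) (p : pred (symbol X)) :
  0 < sumn (map (count p) L) -> exists k, k < size L /\ 0 < count p (nth [::] L k).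
Proof.
elim: L => //= r L IH H.
case: (posnP (count p r)) => Hr.
- have [k [Hk Hc]] := IH ltac:(lia); by exists k.+1.
- by exists 0.
Qed.

Lemma two_rules (L : seq (seq (symbol X))) (p : pred (symbol X)) :
  1 < sumn (map (count p) L) ->
  (exists k, k < size L /\ 1 < count p (nth [::] L k)) \/
  (exists k1 k2, [/\ k1 < size L, k2 < size L, k1 != k2,
      0 < count p (nth [::] L k1) & 0 < count p (nth [::] L k2)]).
Proof.
elim: L => //= r L IH H.
case: (ltnP 1 (count p r)) => Hr.
- by left; exists 0.
- case: (posnP (count p r)) => Hr0.
  + case: (IH ltac:(lia)) => [[k [Hk Hc]]|[k1 [k2 [H1 H2 H3 H4 H5]]]].
    * by left; exists k.+1.
    * by right; exists k1.+1, k2.+1; split.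
  + have [k [Hk Hc]] := one_rule (L := L) (p := p) ltac:(lia).
    by right; exists 0, k.+1; split.
Qed.

Lemma secL G w : grammar_for w G -> (forall G', grammar_for w G' -> glen G <= glen G') ->
  (forall k, 0 < k < size G -> nth [::] G k != [::]) ->
  forall i, 0 < i < size G -> size (E G i) <= Lrep w.
Proof.
move=> [HA Hw] Hmin HN i Hi.
have [HaE HpE] := NE HA HN Hi.
set R := sumn (map (count (pred1 (inr i))) G).
have HR : 1 < R.
  have Hg : grammar_for w (Ginl G i).
    split; first by apply: Ginl_adm => //; lia.
    rewrite -Hw /generated size_Ginl; last lia.
    apply: Ginl_expand => //; lia.
  have H1 := Hmin _ Hg.
  have H2 := glen_set (L := map (inl_rule i (nth [::] G i)) G) (k := i) [::] ltac:(rewrite size_map; lia).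
  have H3 := glen_map i (nth [::] G i) G.
  have H4 := size_inl i (nth [::] G i) (nth [::] G i).
  rewrite (nth_map [::]) in H2; last lia.
  have H5 := HN i Hi.
  move: H1 H2 H3 H4 H5; rewrite /Ginl -/R.
  case: (nth [::] G i) => [|x t] //= H1 H2 H3 H4 _.
  set c := count _ _ in H4.
  set a := size (inl_rule _ _ _) in H2 H4.
  nia.
have [HG0 _] := proj1 (admP G) HA.
have Hocc : 1 < size (occs G i (size G) 0).
  have Rch : forall k, k < size G -> (k == 0) || (0 < size (occs G k (size G) 0)).
    move=> k Hk; case: (posnP k) => [->//|Hk0].
    by rewrite (reach (conj HA Hw) Hmin HN (k := k)) ?orbT //; lia.
  case: (two_rules HR) => [[k [Hk Hc]]|[k1 [k2 [H1 H2 H3 H4 H5]]]].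
  - apply: (occsC HA (k1 := k) (k2 := k)) => //; [lia|exact: Rch|exact: Rch|].
    by right.
  - apply: (occsC HA (k1 := k1) (k2 := k2)) => //; [lia|exact: Rch|exact: Rch|].
    by left; rewrite -!has_pred1 !has_count.
set l := occs G i (size G) 0 in Hocc.
have Hu : uniq l.
  have := occs_sorted (size G) 0 HA HpE; rewrite ltn_sorted_uniq_leq.
  by case/andP.
have Hp : nth 0 l 0 \in l by rewrite mem_nth //; exact: ltnW.
have Hq : nth 0 l 1 \in l by rewrite mem_nth.
have Hpq : nth 0 l 0 != nth 0 l 1 by rewrite nth_uniq // ltnW.
have [x1 [y1 [E1 S1]]] := occs_pos HA Hp.
have [x2 [y2 [E2 S2]]] := occs_pos HA Hq.
apply: Lrep_ge; exists x1, y1, x2, y2; rewrite -Hw; split => //; split => //.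
move=> Ex; move: Hpq; rewrite -S1 -S2 Ex eqxx //.
Qed.

End Inl.

Section Fin.
Variable X : finType.
Implicit Types (G : grammar X) (s : symbol X) (l : seq (symbol X)).

Lemma split_flat (g : symbol X -> seq X) l c : l != [::] ->
  c <= size (flatten (map g l)) ->
  exists l1 s l2 t1 t2, [/\ l = l1 ++ s :: l2, g s = t1 ++ t2,
    take c (flatten (map g l)) = flatten (map g l1) ++ t1 &
    drop c (flatten (map g l)) = t2 ++ flatten (map g l2)].
Proof.
elim: l c => [|s l IH] c // _ /=.
case: (leqP c (size (g s))) => Hc Hsz.
- exists [::], s, l, (take c (g s)), (drop c (g s)); split => //.
  + by rewrite cat_take_drop.
  + by rewrite takel_cat.
  + by rewrite drop_cat ltn_neqAle Hc andbT; case: eqP => [->|//]; rewrite subnn drop0 drop_size.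
- case: l IH Hsz => [|s' l'] IH Hsz.
  + by move: Hsz; rewrite /= cats0; lia.
  have [l1 [s1 [l2 [t1 [t2 [E1 E2 E3 E4]]]]]] := IH (c - size (g s)) isT
     ltac:(move: Hsz; rewrite size_cat; lia).
  exists (s :: l1), s1, l2, t1, t2; split => //.
  + by rewrite E1.
  + rewrite take_cat ltnNge (ltnW Hc) /= E3 catA //.
  + by rewrite drop_cat ltnNge (ltnW Hc) /= E4.
Qed.

Lemma startrep a rest b : admissible (a :: rest) ->
  (forall s, s \in b -> sym_ok (size rest).+1 0 s) ->
  admissible (b :: rest) /\
  generated (b :: rest) = flatten (map (symE (E (a :: rest))) b).
Proof.
move=> HA Hb; split.
- apply/admP; split => // -[|k] s /=; first exact: Hb.
  move=> Hs; exact: (adm_sym HA (k := k.+1) Hs).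
- change (flatten (map (symE (expand (b :: rest) (size rest))) b) = flatten (map (symE (E (a :: rest))) b)).
  congr flatten; apply/eq_in_map => -[x|m] Hm //.
  have /= /andP [p q] := Hb _ Hm.
  change (expand (b :: rest) (size rest) m = E (a :: rest) m).
  transitivity (expand (a :: rest) (size rest) m).
    rewrite -[X in expand _ _ X]/(id m).
    apply: (sim (P := fun m => 0 < m)); try lia.
    + by case=> [|m'] //= _; rewrite shs_id.
    + move=> m0 m' Hm0 Hs'; have /= /andP [e f] := adm_sym HA Hs'; lia.
  apply: stab => //=; lia.
Qed.

Lemma sumn_le_mul (rest : seq (seq (symbol X))) L :
  (forall r, r \in rest -> size r <= L) -> sumn (map size rest) <= size rest * L.
Proof.
elim: rest => //= r rest IH H.
have := H r (mem_head _ _); have := IH (fun r' Hr' => H r' (mem_behead (s := r :: rest) Hr')).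
move=> h1 h2; rewrite mulSn; exact: leq_add h2 h1.
Qed.

End Fin.

Theorem theorem4 (X : finType) (Gam : seq X -> grammar X)
  (HGam : YK_minimal_transform Gam) (u v : seq X) :
  let w := u ++ v in
  glen (Gam w) <= glen (Gam u) + glen (Gam v) /\
  glen (Gam u) + glen (Gam v) <= glen (Gam w) + gV (Gam w) * Lrep w.
Proof.
move=> w.
have [[HAu Hgu] [Hmu HNu]] := HGam u.
have [[HAv Hgv] [Hmv HNv]] := HGam v.
have [[HAw Hgw] [Hmw HNw]] := HGam w.
split.
- have [C [HC [HgC HlC]]] := comb HAu HAv.
  rewrite -HlC; apply: Hmw; split => //; by rewrite HgC Hgu Hgv.
- have Hsec := secL (conj HAw Hgw) Hmw HNw.
  set L := Lrep w in Hsec *.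
  move: HAw Hgw Hmw HNw Hsec; rewrite /gV.
  case: (Gam w) => [|a rest]; first by case/admP.
  move=> HAw Hgw Hmw HNw Hsec.
  have HNE := NE HAw HNw.
  have HS : sumn (map size rest) <= size rest * L.
    apply: sumn_le_mul => r Hr.
    have Hi : index r rest < size rest by rewrite index_mem.
    have := HNE (index r rest).+1 ltac:(simpl; lia).
    have := Hsec (index r rest).+1 ltac:(simpl; lia).
    rewrite /= nth_index // => H1 [H2 _]; exact: leq_trans H2 H1.
  have Hw : flatten (map (symE (E (a :: rest))) a) = u ++ v.
    by rewrite -(unfoldE 0 HAw) -genE Hgw.
  have [bu [bv [Hbu Hbv Eu Ev Hsz]]] :
    exists bu bv, [/\ (forall s, s \in bu -> sym_ok (size rest).+1 0 s),
       (forall s, s \in bv -> sym_ok (size rest).+1 0 s),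
       flatten (map (symE (E (a :: rest))) bu) = u,
       flatten (map (symE (E (a :: rest))) bv) = v &
       size bu + size bv <= size a + L].
    case: (eqVneq a [::]) => Ha.
    + subst a; have Hs0 : size (u ++ v) = 0 by rewrite -Hw.
      rewrite size_cat in Hs0.
      have [Hu1 Hv1] : size u = 0 /\ size v = 0 by move: Hs0; case: (size u) => [|?]; case: (size v) => [|?].
      have Hu0 : u = [::] by apply/eqP; rewrite -size_eq0 Hu1.
      have Hv0 : v = [::] by apply/eqP; rewrite -size_eq0 Hv1.
      by exists [::], [::]; rewrite Hu0 Hv0.
    + have [l1 [s [l2 [t1 [t2 [E1 E2 E3 E4]]]]]] :=
        @split_flat X (symE (E (a :: rest))) a (size u) Ha ltac:(rewrite Hw size_cat; lia).
      rewrite Hw take_size_cat // in E3.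
      rewrite Hw drop_size_cat // in E4.
      have Hsa : forall s', s' \in a -> sym_ok (size rest).+1 0 s'.
        by move=> s' Hs'; exact: (adm_sym HAw (k := 0) Hs').
      exists (l1 ++ map inl t1), (map inl t2 ++ l2); split.
      * move=> s'; rewrite mem_cat => /orP [H|/mapP [x _ ->] //].
        by apply: Hsa; rewrite E1 mem_cat H.
      * move=> s'; rewrite mem_cat => /orP [/mapP [x _ ->] //|H].
        by apply: Hsa; rewrite E1 mem_cat in_cons H !orbT.
      * by rewrite map_cat flatten_cat flat_inl E3.
      * by rewrite map_cat flatten_cat flat_inl E4.
      * have Hgs : size (t1 ++ t2) <= maxn 1 L.
          rewrite -E2; case: s E1 {E2} => [x|m] E1 /=; first by rewrite leq_maxl.
          have Hm : sym_ok (size rest).+1 0 (inr m : symbol X).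
            by apply: Hsa; rewrite E1 mem_cat in_cons eqxx orbT.
          move: Hm => /= /andP [p q].
          apply: leq_trans (Hsec m ltac:(simpl; lia)) (leq_maxr _ _).
        move: Hgs; rewrite E1 !size_cat !size_map /=.
        set x1 := size t1; set x2 := size t2; set x3 := size l1; set x4 := size l2; clearbody x1 x2 x3 x4; lia.
  have [HAu' Hgu'] := startrep HAw Hbu.
  have [HAv' Hgv'] := startrep HAw Hbv.
  have H1 := Hmu (bu :: rest) (conj HAu' (etrans Hgu' Eu)).
  have H2 := Hmv (bv :: rest) (conj HAv' (etrans Hgv' Ev)).
  move: H1 H2 Hsz HS; rewrite /glen /=.
  set y1 := sumn _; set y2 := sumn _; set y3 := sumn _; set z1 := size bu; set z2 := size bv; set z3 := size a; set z4 := size rest.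
  clearbody y1 y2 y3 z1 z2 z3 z4 L; rewrite mulSn; lia.
Qed.
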